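(* Let $s,t,p\ge 1$, $A,B\in GL(n)$ and $Q\in\mathcal{P}(n)$ with $k=\lambda_1(Q)>1$. If the equation $X^s+A^*X^{-t}A+B^*X^{-p}B=Q$ has a Hermitian positive definite solution, then $$\rho^2(A)<\frac{q^q k^{1+\tilde q}}{(q+1)^{q+1}}\quad\text{and}\quad \rho^2(B)<\frac{q^q k^{1+\tilde q}}{(q+1)^{q+1}},$$ where $q=\min\{t/s,p/s\}$ and $\tilde q=\max\{t/s,p/s\}$.
   Context: $GL(n)$: $n\times n$ complex nonsingular matrices; $\mathcal{P}(n)$: $n\times n$ Hermitian positive definite matrices. For Hermitian $M$, $\lambda_1(M)$ is its largest eigenvalue; $\rho(M)$ is the spectral radius. Real powers of positive definite matrices are defined by functional calculus. *)

(* Defs.v *)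
(* classical reals. Complex numbers are pairs of reals,
   n x n complex matrices are functions nat -> nat -> C, only entries
   with indices < n are meaningful (equality is taken on indices < n). *)
From Stdlib Require Import Reals.
Open Scope R_scope.

Definition C : Type := (R * R)%type.
Definition RtoC (x : R) : C := (x, 0).
Definition C0 : C := (0, 0).
Definition C1 : C := (1, 0).
Definition Cadd (z w : C) : C := (fst z + fst w, snd z + snd w).
Definition Cmul (z w : C) : C :=
  (fst z * fst w - snd z * snd w, fst z * snd w + snd z * fst w).
Definition Cconj (z : C) : C := (fst z, - snd z).
Definition Cmod (z : C) : R := sqrt (fst z ^ 2 + snd z ^ 2).

Fixpoint Csum (n : nat) (f : nat -> C) : C :=
  match n with
  | O => C0
  | S m => Cadd (Csum m f) (f m)
  end.

Definition Mat := nat -> nat -> C.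
Definition Vec := nat -> C.

Definition meq (n : nat) (A B : Mat) : Prop :=
  forall i j, (i < n)%nat -> (j < n)%nat -> A i j = B i j.
Definition madd (A B : Mat) : Mat := fun i j => Cadd (A i j) (B i j).
Definition mmul (n : nat) (A B : Mat) : Mat :=
  fun i j => Csum n (fun k => Cmul (A i k) (B k j)).
Definition adj (A : Mat) : Mat := fun i j => Cconj (A j i).
Definition mid : Mat := fun i j => if Nat.eqb i j then C1 else C0.
Definition diagR (d : nat -> R) : Mat :=
  fun i j => if Nat.eqb i j then RtoC (d i) else C0.

Definition mvmul (n : nat) (A : Mat) (v : Vec) : Vec :=
  fun i => Csum n (fun k => Cmul (A i k) (v k)).
Definition vnonzero (n : nat) (v : Vec) : Prop :=
  exists i, (i < n)%nat /\ v i <> C0.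
Definition inner (n : nat) (u v : Vec) : C :=
  Csum n (fun i => Cmul (Cconj (u i)) (v i)).

Definition GL (n : nat) (A : Mat) : Prop :=
  exists Ai, meq n (mmul n A Ai) mid /\ meq n (mmul n Ai A) mid.
Definition Hermitian (n : nat) (A : Mat) : Prop := meq n (adj A) A.
Definition HPD (n : nat) (A : Mat) : Prop :=
  Hermitian n A /\
  forall v, vnonzero n v -> 0 < fst (inner n v (mvmul n A v)).
Definition unitary (n : nat) (U : Mat) : Prop :=
  meq n (mmul n (adj U) U) mid /\ meq n (mmul n U (adj U)) mid.

Definition is_rpow (n : nat) (X : Mat) (r : R) (Y : Mat) : Prop :=
  exists (U : Mat) (d : nat -> R),
    unitary n U /\ (forall i, (i < n)%nat -> 0 < d i) /\
    meq n X (mmul n U (mmul n (diagR d) (adj U))) /\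
    meq n Y (mmul n U (mmul n (diagR (fun i => Rpower (d i) r)) (adj U))).

Definition eigenvalue (n : nat) (A : Mat) (z : C) : Prop :=
  exists v, vnonzero n v /\
    forall i, (i < n)%nat -> mvmul n A v i = Cmul z (v i).

Definition is_lambda1 (n : nat) (Q : Mat) (k : R) : Prop :=
  eigenvalue n Q (RtoC k) /\
  forall x : R, eigenvalue n Q (RtoC x) -> x <= k.

Definition is_spectral_radius (n : nat) (A : Mat) (r : R) : Prop :=
  (exists z, eigenvalue n A z /\ Cmod z = r) /\
  forall z, eigenvalue n A z -> Cmod z <= r.

(* Main.v *)
Require Import Defs.
From Stdlib Require Import Reals Lra.
Module RL.
Open Scope R_scope.

Lemma exp_le_mono x y : x <= y -> exp x <= exp y.
Proof. intros [h|h]; [left; apply exp_increasing; auto | subst; lra]. Qed.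

Lemma ln_le_xm1 x : 0 < x -> ln x <= x - 1.
Proof. intros hx. pose proof (exp_ineq1_le (ln x)). rewrite exp_ln in H; lra. Qed.

Lemma R_bern r x : 0 < r -> 0 < x -> r + 1 <= r * x + Rpower x (- r).
Proof.
intros hr hx. unfold Rpower.
pose proof (exp_ineq1_le (- r * ln x)). pose proof (ln_le_xm1 x hx).
assert (r * ln x <= r * (x - 1)) by (apply Rmult_le_compat_l; lra). nra.
Qed.

Lemma R_key r k a : 0 < r -> 0 < k -> 0 < a ->
  k <= a + Rpower r r * Rpower k (1 + r) / Rpower (r + 1) (r + 1) * Rpower a (- r).
Proof.
intros hr hk ha.
set (x := a * (r + 1) / (r * k)).
assert (hx : 0 < x) by (unfold x; apply Rdiv_lt_0_compat; nra).
assert (ea : a = k / (r + 1) * r * x) by (unfold x; field; lra).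
assert (eb : Rpower r r * Rpower k (1 + r) / Rpower (r + 1) (r + 1) * Rpower a (- r)
   = k / (r + 1) * Rpower x (- r)).
{ assert (lx : ln x = ln a + ln (r + 1) - ln r - ln k).
  { unfold x, Rdiv.
    rewrite (ln_mult (a * (r + 1)) (/ (r * k))) by (try apply Rinv_0_lt_compat; nra).
    rewrite (ln_mult a (r + 1)) by lra. rewrite ln_Rinv by nra.
    rewrite (ln_mult r k) by lra. ring. }
  assert (ek : k / (r + 1) = exp (ln k - ln (r + 1))).
  { unfold Rminus. rewrite exp_plus, exp_Ropp, exp_ln, exp_ln by lra. reflexivity. }
  rewrite ek. unfold Rpower. rewrite lx.
  unfold Rdiv. rewrite <- !exp_Ropp. rewrite <- !exp_plus. f_equal. ring. }
rewrite eb. rewrite ea at 1.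
pose proof (R_bern r x hr hx).
assert (0 < k / (r + 1)) by (apply Rdiv_lt_0_compat; lra).
assert (k = k / (r + 1) * (r + 1)) by (field; lra).
rewrite H1 at 1.
replace (k / (r + 1) * r * x + k / (r + 1) * Rpower x (- r)) with
  (k / (r + 1) * (r * x + Rpower x (- r))) by ring.
apply Rmult_le_compat_l; lra.
Qed.

Lemma Rpower_pos x y : 0 < Rpower x y.
Proof. unfold Rpower; apply exp_pos. Qed.

Lemma R_hmono q r : 0 < q -> q <= r ->
  Rpower r r / Rpower (r + 1) (r + 1) <= Rpower q q / Rpower (q + 1) (q + 1).
Proof.
intros hq hqr.
set (z := r / (r + 1)).
assert (hz : 0 < z) by (unfold z; apply Rdiv_lt_0_compat; lra).
assert (hz1 : z < 1) by (unfold z; apply (Rmult_lt_reg_r (r + 1)); [lra|]; field_simplify; lra).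
pose proof (R_key q 1 z hq Rlt_0_1 hz) as K.
assert (e1 : Rpower 1 (1 + q) = 1) by (unfold Rpower; rewrite ln_1, Rmult_0_r; apply exp_0).
rewrite e1, Rmult_1_r in K.
set (hq' := Rpower q q / Rpower (q + 1) (q + 1)) in *.
assert (hzq : Rpower z (- q) * Rpower z q = 1).
{ rewrite <- Rpower_plus. replace (- q + q) with 0 by ring. apply Rpower_O; auto. }
assert (A1 : (1 - z) * Rpower z q <= hq').
{ assert (1 - z <= hq' * Rpower z (- q)) by lra.
  pose proof (Rpower_pos z q).
  apply Rmult_le_compat_r with (r := Rpower z q) in H; [|lra].
  rewrite Rmult_assoc, hzq, Rmult_1_r in H; auto. }
assert (A2 : Rpower z r <= Rpower z q).
{ unfold Rpower. apply exp_le_mono.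
  assert (ln z < 0) by (rewrite <- ln_1; apply ln_increasing; lra). nra. }
assert (A3 : Rpower r r / Rpower (r + 1) (r + 1) = (1 - z) * Rpower z r).
{ assert (lz : ln z = ln r - ln (r + 1)).
  { unfold z, Rdiv. rewrite ln_mult; [|lra|]. 2: apply Rinv_0_lt_compat; lra.
    rewrite ln_Rinv; [ring|lra]. }
  assert (e2 : 1 - z = exp (- ln (r + 1))).
  { rewrite exp_Ropp, exp_ln by lra. unfold z; field; lra. }
  rewrite e2. unfold Rpower. rewrite lz. unfold Rdiv. rewrite <- exp_Ropp, <- !exp_plus.
  f_equal; ring. }
rewrite A3. assert (0 <= 1 - z) by lra.
apply Rle_trans with ((1 - z) * Rpower z q); [apply Rmult_le_compat_l; auto | auto].
Qed.

Lemma R_final q r qt k : 0 < q -> q <= r -> r <= qt -> 1 < k ->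
  Rpower r r * Rpower k (1 + r) / Rpower (r + 1) (r + 1) <=
  Rpower q q * Rpower k (1 + qt) / Rpower (q + 1) (q + 1).
Proof.
intros hq hqr hrt hk.
pose proof (R_hmono q r hq hqr).
assert (Rpower k (1 + r) <= Rpower k (1 + qt)) by (apply Rle_Rpower; lra).
pose proof (Rpower_pos k (1 + r)).
replace (Rpower r r * Rpower k (1 + r) / Rpower (r + 1) (r + 1)) with
  (Rpower r r / Rpower (r + 1) (r + 1) * Rpower k (1 + r)) by (field; apply Rgt_not_eq, Rpower_pos).
replace (Rpower q q * Rpower k (1 + qt) / Rpower (q + 1) (q + 1)) with
  (Rpower q q / Rpower (q + 1) (q + 1) * Rpower k (1 + qt)) by (field; apply Rgt_not_eq, Rpower_pos).
apply Rmult_le_compat; try lra.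
unfold Rdiv; apply Rmult_le_pos; [left; apply Rpower_pos | left; apply Rinv_0_lt_compat, Rpower_pos].
Qed.

Lemma R_pointwise s t L k q qt d : 0 < s -> 0 < t -> 0 < q -> q <= t / s -> t / s <= qt ->
  1 < k -> Rpower q q * Rpower k (1 + qt) / Rpower (q + 1) (q + 1) <= L ->
  k <= Rpower d s + L * Rpower d (- t).
Proof.
intros hs ht hq h1 h2 hk hL.
set (a := Rpower d s). set (r := t / s).
assert (ha : 0 < a) by apply Rpower_pos.
assert (hr : 0 < r) by (unfold r; apply Rdiv_lt_0_compat; lra).
pose proof (R_key r k a hr ltac:(lra) ha) as K.
pose proof (R_final q r qt k hq h1 h2 hk) as F.
assert (e : Rpower a (- r) = Rpower d (- t)).
{ unfold a, r. rewrite Rpower_mult. f_equal. field. lra. }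
rewrite e in K. pose proof (Rpower_pos d (- t)).
assert (Rpower r r * Rpower k (1 + r) / Rpower (r + 1) (r + 1) * Rpower d (- t) <= L * Rpower d (- t))
  by (apply Rmult_le_compat_r; lra).
fold a. lra.
Qed.

Lemma Cmod_sq z : Cmod z ^ 2 = fst z * fst z + snd z * snd z.
Proof.
unfold Cmod. rewrite pow2_sqrt. ring.
apply Rplus_le_le_0_compat; apply pow2_ge_0.
Qed.
End RL.
Import RL.
From mathcomp Require Import all_boot all_order all_algebra.
From mathcomp Require Import Rstruct.
From mathcomp.real_closed Require Import complex.
From mathcomp Require Import spectral sesquilinear ring.
Import GRing.Theory Num.Theory Order.TTheory.
Local Open Scope ring_scope.
Local Open Scope complex_scope.

Notation CR := (Rdefinitions.R)[i].
Definition toC (z : Defs.C) : CR := Complex (fst z) (snd z).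
Definition ofC (z : CR) : Defs.C := (complex.Re z, complex.Im z).
Lemma toCK z : ofC (toC z) = z. Proof. by case: z. Qed.
Lemma ofCK z : toC (ofC z) = z. Proof. by case: z. Qed.
Lemma toC_add z w : toC (Cadd z w) = toC z + toC w. Proof. by []. Qed.
Lemma toC_mul z w : toC (Cmul z w) = toC z * toC w.
Proof. by case: z; case: w => a b c d; rewrite /toC /Cmul /=; congr Complex. Qed.
Lemma toC_conj z : toC (Cconj z) = (toC z)^*. Proof. by []. Qed.
Lemma toC0 : toC Defs.C0 = 0. Proof. by []. Qed.
Lemma toC1 : toC Defs.C1 = 1. Proof. by []. Qed.
Lemma toC_R x : toC (RtoC x) = x%:C. Proof. by []. Qed.
Lemma toC_inj z w : toC z = toC w -> z = w.
Proof. by move=> h; rewrite -(toCK z) h toCK. Qed.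

Lemma toC_sum n f : toC (Csum n f) = \sum_(i < n) toC (f i).
Proof.
elim: n => [|n IH]; first by rewrite big_ord0.
by rewrite big_ord_recr /= toC_add IH.
Qed.
Local Open Scope sesquilinear_scope.
Definition toM n (M : Mat) : 'M[CR]_n := \matrix_(i, j) toC (M i j).
Definition toV n (v : Vec) : 'cV[CR]_n := \col_i toC (v i).

Lemma toM_mul n A B : toM n (mmul n A B) = toM n A *m toM n B.
Proof.
apply/matrixP => i j; rewrite !mxE /mmul toC_sum.
by apply: eq_bigr => k _; rewrite toC_mul !mxE.
Qed.
Lemma toM_add n A B : toM n (madd A B) = toM n A + toM n B.
Proof. by apply/matrixP => i j; rewrite !mxE. Qed.
Lemma toM_adj n A : toM n (adj A) = (toM n A)^t*.
Proof. by apply/matrixP => i j; rewrite !mxE. Qed.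
Lemma toM_id n : toM n mid = 1%:M.
Proof.
apply/matrixP => i j; rewrite !mxE /mid.
case: (eqVneq i j) => [->|h]; first by rewrite Nat.eqb_refl.
have : (nat_of_ord i =? nat_of_ord j)%nat = false.
  by apply/Nat.eqb_neq => e; move/eqP: h; apply; apply/val_inj.
by move=> ->.
Qed.
Lemma toM_diag n d : toM n (diagR d) = diag_mx (\row_(i < n) (d i)%:C).
Proof.
apply/matrixP => i j; rewrite !mxE /diagR.
case: (eqVneq i j) => [->|h]; first by rewrite Nat.eqb_refl.
have : (nat_of_ord i =? nat_of_ord j)%nat = false.
  by apply/Nat.eqb_neq => e; move/eqP: h; apply; apply/val_inj.
by move=> ->.
Qed.
Lemma meq_toM n A B : meq n A B <-> toM n A = toM n B.
Proof.
split=> [h|h i j hi hj].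
  by apply/matrixP => i j; rewrite !mxE h //; apply/ssrnat.ltP.
apply: toC_inj.
have := congr1 (fun M : 'M[CR]_n => M (Ordinal (introT ssrnat.ltP hi)) (Ordinal (introT ssrnat.ltP hj))) h.
by rewrite !mxE.
Qed.
Lemma toV_mv n A v : toV n (mvmul n A v) = toM n A *m toV n v.
Proof.
apply/matrixP => i j; rewrite !mxE /mvmul toC_sum.
by apply: eq_bigr => k _; rewrite toC_mul !mxE.
Qed.
Lemma toC_inner n u v : toC (inner n u v) = ((toV n u)^t* *m toV n v) 0 0.
Proof.
rewrite !mxE /inner toC_sum.
by apply: eq_bigr => k _; rewrite toC_mul !mxE.
Qed.
Lemma vnonzero_toV n v : vnonzero n v <-> toV n v != 0.
Proof.
split.
  move=> [i [hi nz]]; apply/negP => /eqP/matrixP/(_ (Ordinal (introT ssrnat.ltP hi)) 0).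
  rewrite !mxE => h; apply: nz; apply: toC_inj; by rewrite h.
move=> h; apply: Classical_Prop.NNPP => hn; move/negP: h; apply.
apply/eqP/matrixP => i j; rewrite !mxE.
case: (Classical_Prop.classic (v i = Defs.C0)) => [-> //|hv].
exfalso; apply: hn; exists i; split => //; exact/ssrnat.ltP.
Qed.

Lemma conj_mul_ge0 (a : CR) : 0 <= a^* * a.
Proof. by rewrite mulrC; apply: mulcJ_ge0. Qed.

Lemma herm_bound n (Q : 'M[CR]_n) (k : R) (v : 'cV[CR]_n) :
  Q^t* = Q ->
  (forall (x : R) (w : 'cV[CR]_n), w != 0 -> Q *m w = x%:C *: w -> x <= k) ->
  (v^t* *m Q *m v) 0 0 <= k%:C * (v^t* *m v) 0 0.
Proof.
move=> hQ hk.
have Qh : Q \is hermsymmx by apply/is_hermitianmxP; rewrite expr0 scale1r hQ.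
set P := spectralmx Q; set sp := spectral_diag Q.
have PU : P \is unitarymx := spectral_unitarymx Q.
have QE : Q = P^t* *m diag_mx sp *m P.
  by rewrite -invmx_unitary //; exact/orthomx_spectralP/hermitian_normalmx.
have PP : P *m P^t* = 1%:M by apply/unitarymxP.
have PP' : P^t* *m P = 1%:M by rewrite -invmx_unitary // mulVmx // unitarymx_unit.
have spR : forall j, exists x : R, sp 0 j = x%:C /\ x <= k.
  move=> j; have /mxOverP := hermitian_spectral_diag_real Qh.
  move/(_ 0 j) => /complex_realP [x hx]; exists x; split=> //.
  apply: (hk x (P^t* *m delta_mx j 0)).
  - apply/negP => /eqP h0; have := congr1 (mulmx P) h0.
    rewrite mulmxA PP mul1mx mulmx0 => /matrixP/(_ j 0); rewrite !mxE !eqxx /=.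
    by move=> /eqP; rewrite oner_eq0.
  - rewrite QE -!mulmxA (mulmxA P) PP mul1mx scalemxAr; congr (_ *m _).
    apply/matrixP => a b; rewrite mul_diag_mx !mxE.
    case: (eqVneq a j) => [->|ne]; first by rewrite hx.
    by rewrite /= !mulr0.
set w := P *m v.
have E1 : v^t* *m Q *m v = w^t* *m diag_mx sp *m w.
  by rewrite QE /w trmx_mul map_mxM !mulmxA.
have E2 : v^t* *m v = w^t* *m w.
  by rewrite /w trmx_mul map_mxM -mulmxA (mulmxA (P^t*)) PP' mul1mx.
rewrite E1 E2 !mxE mulr_sumr; apply: ler_sum => j _.
rewrite mul_mx_diag !mxE; have [x [hx hxk]] := spR j; rewrite hx.
move: (\sum_(j0 < n) _) => a.
have -> : a^* * x%:C * a = x%:C * (a^* * a) by ring.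
by apply: ler_wpM2r; [apply: conj_mul_ge0 | rewrite lecR].
Qed.

Definition dg n (d : nat -> R) : 'M[CR]_n := diag_mx (\row_(i < n) (d i)%:C).

Lemma quad_diag n (U : 'M[CR]_n) (d : nat -> R) (v : 'cV[CR]_n) :
  (v^t* *m (U *m (dg n d *m U^t*)) *m v) 0 0 =
  \sum_(i < n) (d i)%:C * (((U^t* *m v) i 0)^* * (U^t* *m v) i 0).
Proof.
set y := U^t* *m v.
have hy : v^t* *m U = y^t* by rewrite /y trmx_mul map_mxM trmxCK.
rewrite !mulmxA hy -!mulmxA mulmxA !mxE; apply: eq_bigr => j _.
rewrite mul_mx_diag !mxE; move: (y j 0) => a; ring.
Qed.

Lemma quad_id n (U : 'M[CR]_n) (v : 'cV[CR]_n) : U *m U^t* = 1%:M ->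
  (v^t* *m v) 0 0 = \sum_(i < n) (((U^t* *m v) i 0)^* * (U^t* *m v) i 0).
Proof.
move=> hU; set y := U^t* *m v.
have hy : v^t* *m U = y^t* by rewrite /y trmx_mul map_mxM trmxCK.
have -> : v^t* *m v = y^t* *m y by rewrite -hy /y -mulmxA (mulmxA U) hU mul1mx.
by rewrite !mxE; apply: eq_bigr => j _; rewrite !mxE.
Qed.

Lemma fc_unique n (U1 U2 : 'M[CR]_n) (d1 d2 : nat -> R) (f : R -> R) :
  U1^t* *m U1 = 1%:M -> U1 *m U1^t* = 1%:M ->
  U2^t* *m U2 = 1%:M -> U2 *m U2^t* = 1%:M ->
  U1 *m (dg n d1 *m U1^t*) = U2 *m (dg n d2 *m U2^t*) ->
  U1 *m (dg n (fun i => f (d1 i)) *m U1^t*) = U2 *m (dg n (fun i => f (d2 i)) *m U2^t*).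
Proof.
move=> h1 h1' h2 h2' H.
set W := U2^t* *m U1.
have HW : W *m dg n d1 = dg n d2 *m W.
  have := congr1 (fun M => U2^t* *m M *m U1) H.
  rewrite !mulmxA h2 mul1mx -!mulmxA h1 mulmx1 => ->; by rewrite !mulmxA.
have key : forall W' : 'M_n, W' *m dg n d1 = dg n d2 *m W' ->
    W' *m dg n (fun i => f (d1 i)) = dg n (fun i => f (d2 i)) *m W'.
  move=> W' HW'; apply/matrixP => i j; move/matrixP: HW' => /(_ i j).
  rewrite /dg !mul_mx_diag !mul_diag_mx !mxE.
  case: (eqVneq (W' i j) 0) => [->|nz]; first by move=> _; rewrite mul0r mulr0.
  rewrite mulrC => /(mulIf nz) [->]; by rewrite mulrC.
have HF := key W HW.
rewrite {1}(_ : U1 = U2 *m W); last by rewrite /W mulmxA h2' mul1mx.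
rewrite -mulmxA (mulmxA W) HF -mulmxA; congr (_ *m (_ *m _)).
by rewrite /W -mulmxA h1' mulmx1.
Qed.

Lemma pos_sum n (d : nat -> R) (y : 'cV[CR]_n) :
  (forall i, 0 < d i) -> y != 0 ->
  0 < \sum_(i < n) (d i)%:C * ((y i 0)^* * y i 0).
Proof.
move=> hd hy.
have [i hi] : exists i, y i 0 != 0.
  apply: Classical_Prop.NNPP => hn; move/negP: hy; apply; apply/eqP/matrixP => a b.
  rewrite ord1 mxE; case: (eqVneq (y a 0) 0) => // h; exfalso; apply: hn; by exists a.
rewrite (bigD1 i) //=; apply: ltr_pwDl.
  apply: mulr_gt0; first by rewrite ltcR.
  by rewrite lt_def conj_mul_ge0 andbT mulf_neq0 // conjC_eq0.
apply: sumr_ge0 => j _; apply: mulr_ge0; first by rewrite lecR ltW.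
exact: conj_mul_ge0.
Qed.

Lemma quad_conj n (M C : 'M[CR]_n) (v : 'cV[CR]_n) :
  v^t* *m (M^t* *m (C *m M)) *m v = (M *m v)^t* *m C *m (M *m v).
Proof. by rewrite trmx_mul map_mxM !mulmxA. Qed.

Lemma key_mc n (Q A B Xs Xt Xp U1 U2 U3 : 'M[CR]_n) (d1 d2 d3 : nat -> R)
  (s t p k L : R) (z : CR) (v : 'cV[CR]_n) :
  U1^t* *m U1 = 1%:M -> U1 *m U1^t* = 1%:M ->
  U2^t* *m U2 = 1%:M -> U2 *m U2^t* = 1%:M ->
  U3^t* *m U3 = 1%:M -> U3 *m U3^t* = 1%:M ->
  U1 *m (dg n d1 *m U1^t*) = U2 *m (dg n d2 *m U2^t*) ->
  Xs = U1 *m (dg n (fun i => Rpower (d1 i) s) *m U1^t*) ->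
  Xt = U2 *m (dg n (fun i => Rpower (d2 i) (- t)) *m U2^t*) ->
  Xp = U3 *m (dg n (fun i => Rpower (d3 i) (- p)) *m U3^t*) ->
  Xs + (A^t* *m (Xt *m A) + B^t* *m (Xp *m B)) = Q ->
  (forall w : 'cV[CR]_n, w != 0 -> B *m w != 0) ->
  Q^t* = Q ->
  (forall (x : R) (w : 'cV[CR]_n), w != 0 -> Q *m w = x%:C *: w -> x <= k) ->
  v != 0 -> A *m v = z *: v -> z^* * z = L%:C ->
  (forall i, k <= Rpower (d1 i) s + L * Rpower (d1 i) (- t)) ->
  False.
Proof.
move=> h1 h1' h2 h2' h3 h3' HX HXs HXt HXp HQ HB hQ hk hv hAv hz Hpt.
have HXt' : Xt = U1 *m (dg n (fun i => Rpower (d1 i) (- t)) *m U1^t*).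
  by rewrite HXt; symmetry; exact: (@fc_unique n U1 U2 d1 d2 (fun x => Rpower x (- t)) h1 h1' h2 h2' HX).
set y := U1^t* *m v.
set w := fun i : 'I_n => (y i 0)^* * y i 0.
have hw : forall i, 0 <= w i by move=> i; apply: conj_mul_ge0.
have E : (v^t* *m Q *m v) 0 0 =
  (\sum_(i < n) (Rpower (d1 i) s)%:C * w i) +
  (L%:C * \sum_(i < n) (Rpower (d1 i) (- t))%:C * w i) +
  ((B *m v)^t* *m Xp *m (B *m v)) 0 0.
  have addE : forall M N : 'M[CR]_1, (M + N) 0 0 = M 0 0 + N 0 0.
    by move=> M N; rewrite mxE.
  rewrite -HQ mulmxDr mulmxDl mulmxDr mulmxDl !addE !quad_conj hAv addrA.
  congr (_ + _ + _); first by rewrite HXs quad_diag.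
  have -> : (z *: v)^t* = z^* *: v^t*.
    by apply/matrixP => a b; rewrite !mxE rmorphM.
  have scE : forall (a : CR) (M : 'M[CR]_1), (a *: M) 0 0 = a * M 0 0.
    by move=> a M; rewrite mxE.
  rewrite -!scalemxAl -scalemxAr !scE HXt' quad_diag mulrA hz.
  done.
have Hb : 0 < ((B *m v)^t* *m Xp *m (B *m v)) 0 0.
  rewrite HXp quad_diag; apply: (@pos_sum n (fun i => Rpower (d3 i) (- p)) (U3^t* *m (B *m v))).
    by move=> i; rewrite /Rpower; apply/RltP; apply: exp_pos.
  apply/negP => /eqP h0; move/negP: (HB v hv); apply; apply/eqP.
  by rewrite -(mul1mx (B *m v)) -h3' -mulmxA h0 mulmx0.
have Hk : (v^t* *m Q *m v) 0 0 <= k%:C * \sum_(i < n) w i.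
  by rewrite -(@quad_id n U1 v h1'); apply: herm_bound.
have Hs : k%:C * \sum_(i < n) w i <=
  (\sum_(i < n) (Rpower (d1 i) s)%:C * w i) +
  (L%:C * \sum_(i < n) (Rpower (d1 i) (- t))%:C * w i).
  rewrite !mulr_sumr -big_split /=; apply: ler_sum => i _.
  have -> : (Rpower (d1 i) s)%:C * w i + L%:C * ((Rpower (d1 i) (- t))%:C * w i)
     = (Rpower (d1 i) s + L * Rpower (d1 i) (- t))%:C * w i.
    by rewrite rmorphD rmorphM /=; ring.
  by apply: ler_wpM2r => //; rewrite lecR.
move: Hk; rewrite E => Hk.
have := lt_le_trans (ltr_pwDr Hb (lexx _)) Hk.
by move=> h; move: (lt_le_trans h Hs); rewrite ltxx.
Qed.



Lemma toM_dg n d : toM n (diagR d) = dg n d.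
Proof. exact: toM_diag. Qed.

Lemma unitary_toM n U : unitary n U ->
  (toM n U)^t* *m toM n U = 1%:M /\ toM n U *m (toM n U)^t* = 1%:M.
Proof.
move=> [h1 h2]; move/meq_toM: h1; move/meq_toM: h2.
by rewrite !toM_mul toM_adj toM_id => h2 h1.
Qed.

Lemma rpow_toM n X r Y : is_rpow n X r Y ->
  exists U d, ((toM n U)^t* *m toM n U = 1%:M /\ toM n U *m (toM n U)^t* = 1%:M) /\
    toM n X = toM n U *m (dg n d *m (toM n U)^t*) /\
    toM n Y = toM n U *m (dg n (fun i => Rpower (d i) r) *m (toM n U)^t*).
Proof.
move=> [U [d [hU [hd [hX hY]]]]]; exists U, d; split; first exact: unitary_toM.
move/meq_toM: hX; move/meq_toM: hY; rewrite !toM_mul !toM_dg !toM_adj => hY hX.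
by split.
Qed.

Definition ofV n (w : 'cV[CR]_n) : Vec :=
  fun i => match (insub i : option 'I_n) with Some j => ofC (w j 0) | None => Defs.C0 end.

Lemma toV_ofV n w : toV n (ofV n w) = w.
Proof. by apply/matrixP => i j; rewrite !mxE ord1 /ofV valK ofCK. Qed.

Lemma ofV_at n w i (hi : (i < n)%N) : toC (ofV n w i) = w (Ordinal hi) 0.
Proof. by rewrite /ofV insubT ofCK. Qed.

Lemma gl_inj n B : GL n B -> forall w : 'cV[CR]_n, w != 0 -> toM n B *m w != 0.
Proof.
move=> [Bi [_ h]] w hw; move/meq_toM: h; rewrite toM_mul toM_id => h.
apply/negP => /eqP h0; move/negP: hw; apply; apply/eqP.
by rewrite -(mul1mx w) -h -mulmxA h0 mulmx0.
Qed.

Lemma lambda1_hk n Q k : is_lambda1 n Q k ->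
  forall (x : R) (w : 'cV[CR]_n), w != 0 -> toM n Q *m w = x%:C *: w -> x <= k.
Proof.
move=> [_ hk] x w hw hQw; apply/RleP; apply: hk.
exists (ofV n w); split; first by apply/vnonzero_toV; rewrite toV_ofV.
move=> i hi; apply: toC_inj; have hi' : (i < n)%N by apply/ssrnat.ltP.
rewrite toC_mul toC_R ofV_at.
have := congr1 (fun M : 'cV[CR]_n => M (Ordinal hi') 0) (toV_mv n Q (ofV n w)).
rewrite toV_ofV hQw !mxE => <-; done.
Qed.

Lemma eig_toV n A z : Defs.eigenvalue n A z ->
  exists v : 'cV[CR]_n, v != 0 /\ toM n A *m v = toC z *: v.
Proof.
move=> [v [hv h]]; exists (toV n v); split; first exact/vnonzero_toV.
rewrite -toV_mv; apply/matrixP => i j; rewrite !mxE h; last exact/ssrnat.ltP.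
by rewrite toC_mul.
Qed.

Lemma conjz (z : Defs.C) : (toC z)^* * toC z = (Rpow_def.pow (Cmod z) 2)%:C.
Proof.
rewrite Cmod_sq; case: z => a b /=.
apply/eqP; rewrite eq_complex /=; apply/andP; split; apply/eqP;
  rewrite ?RplusE ?RmultE; ring.
Qed.

Definition eqQ n (Xs Xt Xp A B Q : Mat) : Prop :=
  toM n Xs + (toM n (adj A) *m (toM n Xt *m toM n A) + toM n (adj B) *m (toM n Xp *m toM n B))
  = toM n Q.

Lemma eqQ_swap n Xs Xt Xp A B Q : eqQ n Xs Xt Xp A B Q -> eqQ n Xs Xp Xt B A Q.
Proof. by rewrite /eqQ [X in _ + X]addrC. Qed.

Import Defs.
Local Open Scope R_scope.

Lemma half n s t p k A B Q X Xs Xt Xp z q qt :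
  0 < s -> 0 < t -> GL n B -> Hermitian n Q -> is_lambda1 n Q k -> 1 < k ->
  is_rpow n X s Xs -> is_rpow n X (- t) Xt -> is_rpow n X (- p) Xp ->
  eqQ n Xs Xt Xp A B Q ->
  0 < q -> q <= t / s -> t / s <= qt -> Defs.eigenvalue n A z ->
  Cmod z ^ 2 < Rpower q q * Rpower k (1 + qt) / Rpower (q + 1) (q + 1).
Proof.
intros hs ht hB hQ hl hk hXs hXt hXp hE hq h1 h2 hz.
destruct (Rlt_or_le (Cmod z ^ 2) (Rpower q q * Rpower k (1 + qt) / Rpower (q + 1) (q + 1)))
  as [h|h]; [exact h|exfalso].
have [v [hv hAv]] := eig_toV _ _ _ hz.
have [U1 [d1 [[u1 u1'] [hX1 hXs']]]] := rpow_toM _ _ _ _ hXs.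
have [U2 [d2 [[u2 u2'] [hX2 hXt']]]] := rpow_toM _ _ _ _ hXt.
have [U3 [d3 [[u3 u3'] [_ hXp']]]] := rpow_toM _ _ _ _ hXp.
apply: (key_mc n (toM n Q) (toM n A) (toM n B) (toM n Xs) (toM n Xt) (toM n Xp)
  (toM n U1) (toM n U2) (toM n U3) d1 d2 d3 s t p k (Cmod z ^ 2) (toC z) v
  u1 u1' u2 u2' u3 u3' _ hXs' hXt' hXp' _ (gl_inj _ _ hB) _ (lambda1_hk _ _ _ hl) hv hAv (conjz z)).
- by rewrite -hX1 -hX2.
- by move: hE; rewrite /eqQ !toM_adj.
- by move/meq_toM: hQ; rewrite toM_adj.
- move=> i; apply/RleP; apply: (R_pointwise s t (Cmod z ^ 2) k q qt) => //.
Qed.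

Theorem mainTheorem3 (n : nat) (s t p k : R) (A B Q : Mat) :
  1 <= s -> 1 <= t -> 1 <= p ->
  GL n A -> GL n B -> HPD n Q ->
  is_lambda1 n Q k -> 1 < k ->
  (exists X Xs Xt Xp : Mat,
      HPD n X /\ is_rpow n X s Xs /\ is_rpow n X (- t) Xt /\
      is_rpow n X (- p) Xp /\
      meq n (madd Xs (madd (mmul n (adj A) (mmul n Xt A))
                           (mmul n (adj B) (mmul n Xp B)))) Q) ->
  forall rA rB : R,
    is_spectral_radius n A rA -> is_spectral_radius n B rB ->
    let q := Rmin (t / s) (p / s) in
    let qt := Rmax (t / s) (p / s) in
    rA ^ 2 < Rpower q q * Rpower k (1 + qt) / Rpower (q + 1) (q + 1) /\
    rB ^ 2 < Rpower q q * Rpower k (1 + qt) / Rpower (q + 1) (q + 1).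
Proof.
intros hs ht hp hA hB hQ hl hk [X [Xs [Xt [Xp [_ [hXs [hXt [hXp hE]]]]]]]] rA rB hrA hrB q qt.
have hE' : eqQ n Xs Xt Xp A B Q.
  by move/meq_toM: hE; rewrite /eqQ !toM_add !toM_mul.
have s0 : 0 < s by lra.
have ts : 0 < t / s by apply: Rdiv_lt_0_compat; lra.
have ps : 0 < p / s by apply: Rdiv_lt_0_compat; lra.
have q0 : 0 < q by apply: Rmin_glb_lt.
split.
- have [[z [hz <-]] _] := hrA.
  apply: (half n s t p k A B Q X Xs Xt Xp z q qt) => //; try lra.
  + exact: (proj1 hQ).
  + exact: Rmin_l.
  + exact: Rmax_l.
- have [[z [hz <-]] _] := hrB.
  apply: (half n s p t k B A Q X Xs Xp Xt z q qt) => //; try lra.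
  + exact: (proj1 hQ).
  + exact: eqQ_swap.
  + exact: Rmin_r.
  + exact: Rmax_r.
Qed.
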